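(* Let $X=\{1,\ldots,K\}$. The family $f_n:X^n\to\mathbb{Q}^K$, $f_n(x)=(p_1(x),\ldots,p_K(x))$, is computable with infinite memory (with output set $Y=\mathbb{Q}^K$, or its subset $(\mathbb{Q}\cap[0,1])^K$, together with a default element).
   Context: Model of computation. Let $X$ (initial values), $Y$ (outputs), $M$ (messages) be sets and, for each integer $d\ge 0$, let $Z_d$ be a set (memory states); each of $Y$, $M$, $Z_d$ contains a distinguished element $\emptyset$. An automaton family is a sequence of maps $(A_d)_{d\ge0}$, $A_d: X\times Z_d\times Y\times M^d\to X\times Z_d\times Y\times M^d$, which leave the first coordinate unchanged. A network is a finite connected simple undirected graph $G=(V,E)$ with $V=\{1,\ldots,n\}$, together with a port labeling: for each node $i$ of degree $d(i)$, a bijection $\ell_i$ from the set of neighbors of $i$ to $\{1,\ldots,d(i)\}$. Given initial values $x_1,\ldots,x_n\in X$, the execution is: node $i$ has state $S_i(t)=(x_i,z_i(t),y_i(t),m_{i,1}(t),\ldots,m_{i,d(i)}(t))$ with $z_i(0)=y_i(0)=m_{i,k}(0)=\emptyset$ ($m_{i,p}(t)$ is the message $i$ sends through its port $p$), and $S_i(t+1)=A_{d(i)}(x_i,z_i(t),y_i(t),\mu_{i,1}(t),\ldots,\mu_{i,d(i)}(t))$, where if $j$ is the neighbor of $i$ with $\ell_i(j)=k$ then $\mu_{i,k}(t)=m_{j,\ell_j(i)}(t)$. An element $y^*\in Y$ is the final output of the execution if there is $t'$ with $y_i(t)=y^*$ for all nodes $i$ and all $t\ge t'$. Infinite memory: $X$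 and $M$ are finite, while the sets $Z_d$ and $Y$ may be countable. A family of functions $(f_n:X^n\to Y)_{n\ge1}$ is computable with infinite memory if there exists an automaton family with infinite memory such that for every $n$, every network with $n$ nodes (every connected graph and every port labeling), and every $x\in X^n$, the execution has a final output equal to $f_n(x_1,\ldots,x_n)$. Proportions. For $X=\{1,\ldots,K\}$ and $x\in X^n$, $p_k(x)=|\{i: x_i=k\}|/n$. *)

(* Defs.v *)
From HB Require Import structures.
From mathcomp Require Import all_boot all_order all_algebra.
Unset Strict Implicit. Unset Printing Implicit Defensive.
Import Order.TTheory GRing.Theory Num.Theory.

(* A network on nodes 'I_n (node i of the paper = ordinal i-1).
   The port labeling l_i is represented by its inverse  nbr i : 'I_(deg i) -> 'I_n
   (port k of node i leads to neighbor nbr i k), which is a bijection onto the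
   neighbours of i; back i k is the port of nbr i k leading back to i, i.e.
   l_{nbr i k}(i). *)
Record network (n : nat) := Network {
  adj : rel 'I_n;
  adj_sym : symmetric adj;
  adj_irr : irreflexive adj;
  adj_conn : forall i j, connect adj i j;
  deg : 'I_n -> nat;
  nbr : forall i, 'I_(deg i) -> 'I_n;
  nbr_inj : forall i, injective (nbr i);
  nbr_adj : forall i j, adj i j <-> exists k, nbr i k = j;
  back : forall i (k : 'I_(deg i)), 'I_(deg (nbr i k));
  backP : forall i k, nbr (nbr i k) (back i k) = i
}.

Record automaton (X Y M : Type) (Z : nat -> Type) := Automaton {
  trans : forall d, X * Z d * Y * {ffun 'I_d -> M} -> X * Z d * Y * {ffun 'I_d -> M};
  trans_fst : forall d s, (trans d s).1.1.1 = s.1.1.1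
}.

Arguments deg {n} _ i.
Arguments nbr {n} _ i k.
Arguments back {n} _ i k.
Arguments trans {X Y M Z} _ d s.

Section Exec.

Variables (X Y M : Type) (Z : nat -> Type) (A : automaton X Y M Z)
  (z0 : forall d, Z d) (y0 : Y) (m0 : M) (n : nat) (N : network n) (x : 'I_n -> X).

Fixpoint exec (t : nat) : forall i : 'I_n,
    X * Z (deg N i) * Y * {ffun 'I_(deg N i) -> M} :=
  match t with
  | 0 => fun i => (x i, z0 (deg N i), y0, [ffun => m0])
  | t'.+1 => fun i =>
      let s := exec t' i in
      trans A (deg N i) (s.1.1.1, s.1.1.2, s.1.2,
               [ffun k => (exec t' (nbr N i k)).2 (back N i k)])
  end.

Definition final_output (ystar : Y) : Prop :=
  exists t', forall t, t' <= t -> forall i, (exec t i).1.2 = ystar.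
End Exec.
Arguments exec {X Y M Z} _ z0 y0 m0 {n} _ x t i.
Arguments final_output {X Y M Z} _ z0 y0 m0 {n} _ x ystar.

Definition computable_inf_mem (X : finType) (Y : countType) (y0 : Y)
    (f : forall n, ('I_n -> X) -> Y) : Prop :=
  exists (M : finType) (m0 : M) (Z : nat -> countType) (z0 : forall d, Z d)
         (A : automaton X Y M Z),
    forall n, 0 < n -> forall (N : network n) (x : 'I_n -> X),
      final_output A z0 y0 m0 N x (f n x).

Definition proportions {K n : nat} (x : 'I_n -> 'I_K) : {ffun 'I_K -> rat} :=
  [ffun k => ((#|[pred i | x i == k]|)%:R / n%:R)%R].

(* Main.v *)
Require Import Defs.
From mathcomp Require Import all_boot all_order all_algebra.
From Stdlib Require Import Classical.
Set Implicit Arguments. Unset Strict Implicit. Unset Printing Implicit Defensive.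
Import GRing.Theory Num.Theory.

Definition enc (c : nat) : seq bool := nseq c true ++ [:: false].
Definition encl (l : seq nat) : seq bool := flatten (map enc l).
Fixpoint go (c : nat) (s : seq bool) : seq nat :=
  match s with
  | [::] => [::]
  | true :: s' => go c.+1 s'
  | false :: s' => c :: go 0 s'
  end.
Definition decode s := go 0 s.

Lemma go_nseq c a s : go c (nseq a true ++ s) = go (c + a) s.
Proof. by elim: a c => [|a IH] c /=; rewrite ?addn0 // IH addSnnS. Qed.

Lemma decode_enc c r : decode (enc c ++ r) = c :: decode r.
Proof. by rewrite /decode /enc -catA go_nseq. Qed.

Lemma size_enc c : size (enc c) = c.+1.
Proof. by rewrite /enc size_cat size_nseq addn1. Qed.

Lemma decode_take l a : exists k, decode (take a (encl l)) = take k l /\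
  forall L, L <= size l -> size (encl (take L l)) <= a -> L <= k.
Proof.
elim: l a => [|c l IH] a /=.
  by exists 0; split => // L; rewrite leqn0 => /eqP ->.
rewrite /encl /= -/(encl l).
case: (leqP a c) => h.
  exists 0; split.
    have h1 : a <= size (enc c) by rewrite size_enc ltnW.
    have h2 : a <= size (nseq c true) by rewrite size_nseq.
    rewrite (takel_cat _ h1) /enc (takel_cat _ h2) (take_nseq _ h) /decode.
    by rewrite -[nseq _ _]cats0 go_nseq.
  case=> [|L] // _; rewrite /encl /= size_cat size_enc => H.
  by move: (leq_trans (leq_addr _ _) H); rewrite ltnNge h.
have [k [Hk1 Hk2]] := IH (a - c.+1).
exists k.+1; split.
  rewrite take_cat size_enc ltnNge h /= decode_enc Hk1 //.
case=> [|L] //= HL; rewrite /encl /= size_cat size_enc -/(encl _) => H.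
rewrite ltnS; apply: Hk2 => //.
by rewrite leq_subRL ?h // addnC.
Qed.
Section Net.
Context {n : nat} (N : network n) (xv : 'I_n -> nat).

Definition nbrn (i : 'I_n) (p : nat) : 'I_n :=
  if (insub p : option 'I_(deg N i)) is Some k then nbr N i k else i.
Definition backn (i : 'I_n) (p : nat) : nat :=
  if (insub p : option 'I_(deg N i)) is Some k then val (back N i k) else 0.

Lemma nbrn_val i (k : 'I_(deg N i)) : nbrn i k = nbr N i k.
Proof. by rewrite /nbrn valK. Qed.
Lemma backn_val i (k : 'I_(deg N i)) : backn i k = back N i k.
Proof. by rewrite /backn valK. Qed.

Lemma nbrnK i p : p < deg N i ->
  nbrn (nbrn i p) (backn i p) = i /\ backn i p < deg N (nbrn i p).
Proof.
move=> h; have -> : p = val (Ordinal h) by [].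
by rewrite nbrn_val backn_val nbrn_val backP ltn_ord.
Qed.

Lemma adj_nbrn i w : adj _ N i w -> exists2 p, p < deg N i & nbrn i p = w.
Proof.
move/(nbr_adj _ N _ _) => [k <-]; exists k; first exact: ltn_ord.
by rewrite nbrn_val.
Qed.

Fixpoint col (j : nat) (i : 'I_n) : nat :=
  match j with
  | 0 => pickle (xv i, [::] : seq (nat * nat))
  | j'.+1 => pickle (col j' i, [seq (col j' (nbrn i p), backn i p) | p <- iota 0 (deg N i)])
  end.

Lemma col_inj j u v : col j.+1 u = col j.+1 v ->
  [/\ col j u = col j v, deg N u = deg N v &
   forall p, p < deg N u -> col j (nbrn u p) = col j (nbrn v p) /\ backn u p = backn v p].
Proof.
move=> /= /(pcan_inj pickleK) [e1 e2].
have hd : deg N u = deg N v by move: (congr1 size e2); rewrite !size_map !size_iota.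
split=> // p hp.
move: (congr1 (fun l => nth (0, 0) l p) e2) => /=.
rewrite (nth_map 0) ?size_iota // (nth_map 0) ?size_iota -?hd // !nth_iota -?hd //.
by case.
Qed.

Definition R j := [set uv : 'I_n * 'I_n | col j uv.1 == col j uv.2].

Lemma R_sub j : R j.+1 \subset R j.
Proof.
apply/subsetP => -[u v]; rewrite !inE /= => /eqP /col_inj [-> _ _] //.
Qed.

Lemma R_subn i j : i <= j -> R j \subset R i.
Proof.
move=> /subnKC <-; elim: (j - i) => [|d IH]; first by rewrite addn0.
by rewrite addnS (subset_trans (R_sub _)).
Qed.

Lemma nonincr_stab (f : nat -> nat) : (forall j, f j.+1 <= f j) ->
  exists j0, forall j, j0 <= j -> f j = f j0.
Proof.
have mono : forall g : nat -> nat, (forall j, g j.+1 <= g j) ->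
    forall i j, i <= j -> g j <= g i.
  move=> g hg i j /subnKC <-; elim: (j - i) => [|d IH]; first by rewrite addn0.
  by rewrite addnS (leq_trans (hg _)).
suff H : forall b (g : nat -> nat), (forall j, g j.+1 <= g j) -> g 0 <= b ->
  exists j0, forall j, j0 <= j -> g j = g j0 by move=> hf; exact: (H (f 0) f).
elim=> [|b IH] g hg hb.
  exists 0 => j _; apply/eqP; rewrite eqn_leq (mono g hg 0 j) //.
  by move: hb; rewrite leqn0 => /eqP ->.
case: (classic (forall j, g j = g 0)) => [hall|].
  by exists 0 => j _; rewrite hall.
move/not_all_ex_not => [j1 hj1].
have hlt : g j1 < g 0.
  by rewrite ltn_neqAle (mono g hg 0 j1) // andbT; apply/eqP.
have hg' : forall j, g (j1 + j.+1) <= g (j1 + j) by move=> j; rewrite addnS.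
have hb' : g (j1 + 0) <= b by rewrite addn0 -ltnS (leq_trans hlt hb).
have [j0 H0] := IH (fun j => g (j1 + j)) hg' hb'.
exists (j1 + j0) => j hj.
have -> : j = j1 + (j - j1) by rewrite subnKC // (leq_trans (leq_addr _ _) hj).
apply: H0; by rewrite leq_subRL // (leq_trans (leq_addr _ _) hj).
Qed.

Lemma stable_exists : exists s0, forall s, s0 <= s ->
  forall u v, col s u = col s v -> col s.+1 u = col s.+1 v.
Proof.
have [j0 H0] := nonincr_stab (f := fun j => #|R j|)
  (fun j => subset_leq_card (R_sub j)).
exists j0 => s hs u v e.
have eqR : forall j, j0 <= j -> R j = R j0.
  move=> j hj; apply/eqP; rewrite eqEcard R_subn //= (H0 j hj) leqnn //.
have : (u, v) \in R s by rewrite inE e.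
by rewrite eqR // -(eqR s.+1) ?(leq_trans hs) // inE => /eqP.
Qed.

Section Stable.
Variable s : nat.
Hypothesis Hs : forall u v, col s u = col s v -> col s.+1 u = col s.+1 v.

Definition cls u := [set v | col s v == col s u].

Lemma cls_nbr u p : p < deg N u -> #|cls u| <= #|cls (nbrn u p)|.
Proof.
move=> hp.
have key : forall v, v \in cls u -> [/\ deg N v = deg N u,
    col s (nbrn v p) = col s (nbrn u p) & backn v p = backn u p].
  move=> v; rewrite inE => /eqP /Hs /col_inj [_ hd H].
  by have [] := H p; rewrite ?hd.
have inj : {in cls u &, injective (fun v => nbrn v p)}.
  move=> v1 v2 h1 h2 e.
  have [d1 _ b1] := key _ h1; have [d2 _ b2] := key _ h2.
  have p1 : p < deg N v1 by rewrite d1.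
  have p2 : p < deg N v2 by rewrite d2.
  have [k1 _] := nbrnK p1.
  have [k2 _] := nbrnK p2.
  by rewrite -k1 -k2 e b1 b2.
rewrite -(card_in_imset inj); apply: subset_leq_card.
apply/subsetP => w /imsetP [v hv ->]; rewrite inE.
by have [_ -> _] := key _ hv.
Qed.

Lemma cls_adj u w : adj _ N u w -> #|cls u| = #|cls w|.
Proof.
move=> /adj_nbrn [p hp <-]; apply/eqP; rewrite eqn_leq cls_nbr //=.
have [k1 k2] := nbrnK hp.
by rewrite -{2}k1 cls_nbr.
Qed.

Lemma cls_eq u w : #|cls u| = #|cls w|.
Proof.
have /connectP [pth hp ->] := adj_conn _ N u w.
elim: pth u hp => [|a pth IH] u //= /andP [ha hp].
by rewrite (cls_adj ha) IH.
Qed.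

Lemma count_cls (i0 : 'I_n) (P : pred nat) (S : seq nat) :
  uniq S -> (forall e, e \in S -> exists v, e = col s v) ->
  #|[set v | P (col s v) && (col s v \in S)]| = count P S * #|cls i0|.
Proof.
elim: S => [|e S IH] /=.
  move=> _ _; rewrite mul0n; apply/eqP; rewrite cards_eq0; apply/eqP/setP => v.
  by rewrite !inE andbF.
move=> /andP [heS hu] hS.
have -> : [set v | P (col s v) && (col s v \in e :: S)] =
   [set v | P (col s v) && (col s v == e)] :|: [set v | P (col s v) && (col s v \in S)].
  by apply/setP => v; rewrite !inE andb_orr.
rewrite cardsU.
have -> : [set v | P (col s v) && (col s v == e)] :&: [set v | P (col s v) && (col s v \in S)] = set0.
  apply/setP => v; rewrite !inE.
  by case: eqP => [-> | _]; rewrite ?andbF // (negbTE heS) !andbF.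
rewrite cards0 subn0 IH //; last by move=> e' he'; apply: hS; rewrite in_cons he' orbT.
rewrite mulnDl; congr (_ + _).
have [v0 ->] := hS e (mem_head _ _).
case: (boolP (P (col s v0))) => hP /=.
  rewrite mul1n (cls_eq i0 v0); apply: eq_card => v; rewrite !inE.
  by case: eqP => [->|]; rewrite ?hP ?andbF.
rewrite mul0n; apply/eqP; rewrite cards_eq0; apply/eqP/setP => v; rewrite !inE.
by case: eqP => [->|]; rewrite ?(negbTE hP) ?andbF.
Qed.

End Stable.

Definition dc (c : nat) : nat * seq (nat * nat) :=
  odflt (0, [::]) (unpickle c : option (nat * seq (nat * nat))).

Fixpoint ball (c m : nat) : seq nat :=
  match m with
  | 0 => [:: c]
  | m'.+1 => ball (dc c).1 m' ++ flatten [seq ball e.1 m' | e <- (dc c).2]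
  end.

Lemma dc_col j i : dc (col j.+1 i) =
  (col j i, [seq (col j (nbrn i p), backn i p) | p <- iota 0 (deg N i)]).
Proof. by rewrite /dc /= pickleK. Qed.

Lemma ball_sub m j i e : e \in ball (col (j + m) i) m -> exists v, e = col j v.
Proof.
elim: m i e => [|m IH] i e /=.
  by rewrite addn0 inE => /eqP ->; exists i.
rewrite addnS dc_col /= mem_cat => /orP [/IH //|].
move/flatten_mapP => [e' /mapP [p _ ->] /=]; exact: IH.
Qed.

Lemma ball_path m j i p : path (adj _ N) i p -> size p <= m ->
  col j (last i p) \in ball (col (j + m) i) m.
Proof.
elim: m i p => [|m IH] i p /=.
  by case: p => //= _ _; rewrite addn0 inE.
rewrite addnS dc_col /= mem_cat.
case: p => [|w p] /=.
  by move=> _ _; rewrite (IH i [::]).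
move=> /andP [ha hp] hs.
have [q hq hw] := adj_nbrn ha.
apply/orP; right; apply/flatten_mapP.
exists (col (j + m) w, backn i q).
  by apply/mapP; exists q; rewrite ?hw // mem_iota.
exact: IH.
Qed.

Definition getx s c := (dc (iter s (fun c => (dc c).1) c)).1.

Lemma getx_col s v : getx s (col s v) = xv v.
Proof.
rewrite /getx; suff -> : iter s (fun c => (dc c).1) (col s v) = col 0 v.
  by rewrite /dc /= pickleK.
by elim: s => [|s IH] //; rewrite iterSr dc_col.
Qed.

Lemma math_prop s m i k : 0 < n -> n <= m -> (forall u v, col s u = col s v -> col s.+1 u = col s.+1 v) ->
  let S := undup (ball (col (s + m) i) m) in
  ((count (fun e => getx s e == k) S)%:R / (size S)%:R = (#|[pred v | xv v == k]|)%:R / n%:R :> rat)%R.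
Proof.
move=> n0 hm Hs S.
have hS1 : forall e, e \in S -> exists v, e = col s v.
  by move=> e; rewrite mem_undup => /ball_sub.
have hS2 : forall v, col s v \in S.
  move=> v; rewrite mem_undup.
  have /connectP [p hp ->] := adj_conn _ N i v.
  case: (shortenP hp) => p' hp' hu _.
  apply: ball_path => //.
  have := max_card (mem (i :: p')); rewrite card_ord (card_uniqP hu) /= => h.
  exact: leq_trans (ltnW h) hm.
have hu : uniq S := undup_uniq _.
have c1 := count_cls Hs i (fun e => getx s e == k) hu hS1.
have c2 := count_cls Hs i predT hu hS1.
have e1 : #|[set v | (getx s (col s v) == k) && (col s v \in S)]| = #|[pred v | xv v == k]|.
  rewrite -cardsE; apply: eq_card => v; by rewrite !inE getx_col hS2 andbT.
have e2 : #|[set v | predT (col s v) && (col s v \in S)]| = n.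
  transitivity #|[set: 'I_n]|; last by rewrite cardsT card_ord.
  apply: eq_card => v; by rewrite !inE hS2.
have E2 : n = size S * #|cls s i| by rewrite -count_predT -c2 e2.
have -> : ((n%:R : rat) = (size S * #|cls s i|)%:R)%R by rewrite {1}E2.
rewrite -e1 c1 !natrM -mulf_div divff ?mulr1 //.
rewrite pnatr_eq0 -lt0n; apply/card_gt0P; exists i; by rewrite inE.
Qed.

End Net.
Section Auto.
Variable K : nat.

Definition ZZ : nat -> countType := fun d =>
  ((seq nat * {ffun 'I_d -> seq bool} * {ffun 'I_d -> nat})%type : countType).
Definition YY := option {ffun 'I_K -> rat}.

Definition newc d (xv : nat) (cs : seq nat) (dec : {ffun 'I_d -> seq nat}) : nat :=
  if size cs == 0 then pickle (xv, [::] : seq (nat * nat))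
  else pickle (nth 0 cs (size cs).-1,
               [seq (nth 0 (dec p) (size cs), nth 0 (dec p) 0) | p <- enum 'I_d]).

Definition newcs d (xv : nat) (cs : seq nat) (h : {ffun 'I_d -> seq bool}) : seq nat :=
  let dec := [ffun p => decode (h p)] in
  if [forall p, size cs < size (dec p)] then rcons cs (newc xv cs dec) else cs.

Definition propf (c L : nat) : {ffun 'I_K -> rat} :=
  let s := L./2 in let S := undup (ball c (L - s)) in
  [ffun k : 'I_K => ((count (fun e => getx s e == val k) S)%:R / (size S)%:R)%R].

Definition outp (cs : seq nat) : YY :=
  if cs is [::] then None else Some (propf (nth 0 cs (size cs).-1) (size cs).-1).

Definition stepf d (s : 'I_K * ZZ d * YY * {ffun 'I_d -> option bool}) :
    'I_K * ZZ d * YY * {ffun 'I_d -> option bool} :=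
  let xi := s.1.1.1 in let z := s.1.1.2 in let inc := s.2 in
  let cs := z.1.1 in let h := z.1.2 in let sent := z.2 in
  let h' := [ffun p => h p ++ (if inc p is Some b then [:: b] else [::])] in
  let cs' := newcs (val xi) cs h' in
  let st := fun p : 'I_d => encl (val p :: cs') in
  (xi, (cs', h', [ffun p => sent p + (sent p < size (st p))]), outp cs',
   [ffun p => if sent p < size (st p) then Some (nth false (st p) (sent p)) else None]).

Definition AA : automaton 'I_K YY (option bool) ZZ.
Proof. refine (@Automaton _ _ _ _ stepf _); intros; reflexivity. Defined.

Definition z0 (d : nat) : ZZ d := ([::], [ffun => [::]], [ffun => 0]).

Section Run.
Context {n : nat} (N : network n) (x : 'I_n -> 'I_K).
Definition xv v := val (x v).
Definition E t i := exec AA z0 None None N x t i.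
Definition cs t i := (E t i).1.1.2.1.1.
Definition hh t i := (E t i).1.1.2.1.2.
Definition sent t i := (E t i).1.1.2.2.
Definition msg t i := (E t i).2.

Lemma xc t i : (E t i).1.1.1 = x i.
Proof. by elim: t. Qed.

Lemma hh_step t i p : hh t.+1 i p = hh t i p ++
   (if msg t (nbr N i p) (back N i p) is Some b then [:: b] else [::]).
Proof. by rewrite /hh /= ffunE ffunE. Qed.

Lemma cs_step t i : cs t.+1 i = newcs (xv i) (cs t i) (hh t.+1 i).
Proof. by rewrite /cs /= xc. Qed.

Lemma sent_step t i p : sent t.+1 i p =
  sent t i p + (sent t i p < size (encl (val p :: cs t.+1 i))).
Proof. by rewrite /sent /= ffunE. Qed.

Lemma msg_step t i p : msg t.+1 i p =
  if sent t i p < size (encl (val p :: cs t.+1 i))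
  then Some (nth false (encl (val p :: cs t.+1 i)) (sent t i p)) else None.
Proof. by rewrite /msg /= ffunE. Qed.

Lemma y_step t i : (E t.+1 i).1.2 = outp (cs t.+1 i).
Proof. by []. Qed.


Definition mkcs i L := [seq col N xv j i | j <- iota 0 L].
Definition TS i (q : nat) L := encl (q :: mkcs i L).

Lemma encl_cat a b : encl (a ++ b) = encl a ++ encl b.
Proof. by rewrite /encl map_cat flatten_cat. Qed.

Lemma mkcs_prefix i L L' : L <= L' -> exists r, mkcs i L' = mkcs i L ++ r.
Proof.
move=> /subnKC <-; rewrite /mkcs iotaD map_cat; by eexists.
Qed.

Lemma TS_prefix i q L L' : L <= L' -> exists r, TS i q L' = TS i q L ++ r.
Proof.
rewrite /TS => /(mkcs_prefix i) [r ->]; exists (encl r).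
by rewrite -cat_cons encl_cat.
Qed.

Lemma size_TS i q L L' : L <= L' -> size (TS i q L) <= size (TS i q L').
Proof. by move=> /(TS_prefix i q) [r ->]; rewrite size_cat leq_addr. Qed.

Lemma mkcs_S i L : mkcs i L.+1 = rcons (mkcs i L) (col N xv L i).
Proof. by rewrite /mkcs -addn1 iotaD map_cat cats1. Qed.

Lemma nth_mkcs i L j : j < L -> nth 0 (mkcs i L) j = col N xv j i.
Proof. by move=> h; rewrite /mkcs (nth_map 0) ?size_iota // nth_iota. Qed.

Lemma size_mkcs i L : size (mkcs i L) = L.
Proof. by rewrite /mkcs size_map size_iota. Qed.

Lemma take_mkcs i L L' : L <= L' -> take L (mkcs i L') = mkcs i L.
Proof. by move=> h; rewrite /mkcs -map_take take_iota (minn_idPl h). Qed.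

Lemma newcs_ok i (cs0 : seq nat) (h : {ffun 'I_(deg N i) -> seq bool}) :
  cs0 = mkcs i (size cs0) ->
  (forall p, exists a Lj, h p = take a (TS (nbr N i p) (back N i p) Lj)) ->
  newcs (xv i) cs0 h = cs0 \/ newcs (xv i) cs0 h = mkcs i (size cs0).+1.
Proof.
move=> Hc Hh; rewrite /newcs; case: forallP => [Hf|]; last by left.
right; set L := size cs0.
have Hd : forall p : 'I_(deg N i), let dec := decode (h p) in
   nth 0 dec 0 = back N i p /\ (0 < L -> nth 0 dec L = col N xv L.-1 (nbr N i p)).
  move=> p dec; have [a [Lj Ha]] := Hh p.
  have := Hf p; rewrite ffunE -/dec.
  have [k [Hk _]] := decode_take (val (back N i p) :: mkcs (nbr N i p) Lj) a.
  rewrite /dec Ha Hk size_take /= size_mkcs => HL.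
  have HkL : L < k.
    by move: HL; case: (ltnP k Lj.+1) => hk hL; [exact: hL | exact: leq_trans hL hk].
  have HLj : L < Lj.+1.
    by move: HL; case: (ltnP k Lj.+1) => hk hL; [exact: ltn_trans hL hk | exact: hL].
  rewrite !nth_take ?(leq_ltn_trans _ HkL) //; split => // L0.
  by rewrite -(prednK L0) /= nth_mkcs // -ltnS prednK.
rewrite mkcs_S -Hc; congr rcons; rewrite /newc -/L.
case: eqP => [L0|/eqP L0].
  by rewrite L0.
rewrite -lt0n in L0.
rewrite Hc nth_mkcs ?size_mkcs ?prednK // -/L.
rewrite -[in RHS](prednK L0) /=; congr (pickle (_, _)).
rewrite -val_enum_ord -map_comp; apply: eq_map => p /=.
rewrite ffunE; have [H1 H2] := Hd p.
by rewrite H1 H2 // nbrn_val backn_val.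
Qed.

Lemma cs_grow t i : cs t.+1 i = cs t i \/ exists c, cs t.+1 i = rcons (cs t i) c.
Proof. rewrite cs_step /newcs; case: forallP => _; [right; by eexists | by left]. Qed.

Lemma size_cs_mono t i : size (cs t i) <= size (cs t.+1 i).
Proof. by case: (cs_grow t i) => [->|[c ->]]; rewrite ?size_rcons. Qed.

Lemma size_cs_monoT t t' i : t <= t' -> size (cs t i) <= size (cs t' i).
Proof.
move=> /subnKC <-; elim: (t' - t) => [|d IH]; first by rewrite addn0.
by rewrite addnS (leq_trans IH (size_cs_mono _ _)).
Qed.

Lemma sent_mono t i p : sent t i p <= sent t.+1 i p.
Proof. by rewrite sent_step leq_addr. Qed.

Lemma sent_monoT t t' i p : t <= t' -> sent t i p <= sent t' i p.
Proof.
move=> /subnKC <-; elim: (t' - t) => [|d IH]; first by rewrite addn0.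
by rewrite addnS (leq_trans IH (sent_mono _ _)).
Qed.

Lemma take_step (s1 s2 : seq bool) a r : a <= size s1 -> s2 = s1 ++ r ->
  take a s1 ++ (if (if a < size s2 then Some (nth false s2 a) else None) is Some b
                then [:: b] else [::]) = take (a + (a < size s2)) s2.
Proof.
move=> ha e.
have -> : take a s1 = take a s2 by rewrite e takel_cat.
case: ltnP => h; last by rewrite addn0 cats0.
by rewrite addn1 (take_nth false h) cats1.
Qed.

Definition Inv t :=
  [/\ forall i, cs t i = mkcs i (size (cs t i)),
      forall i p, sent t i p <= size (TS i p (size (cs t i))) &
      forall i p, hh t.+1 i p = take (sent t (nbr N i p) (back N i p))
                   (TS (nbr N i p) (back N i p) (size (cs t (nbr N i p))))].

Lemma encl_TS t i (p : nat) : cs t i = mkcs i (size (cs t i)) ->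
  encl (p :: cs t i) = TS i p (size (cs t i)).
Proof. by move=> h; rewrite /TS -h. Qed.

Lemma Inv_all t : Inv t.
Proof.
elim: t => [|t [Ha Hb Hc]].
  split.
  - by [].
  - by move=> i p; rewrite /sent /= ffunE.
  - by move=> i p; rewrite hh_step /hh /msg /sent /= !ffunE take0.
have Ha' : forall i, cs t.+1 i = mkcs i (size (cs t.+1 i)).
  move=> i; rewrite cs_step.
  have Hh : forall p, exists a Lj, hh t.+1 i p = take a (TS (nbr N i p) (back N i p) Lj).
    by move=> p; rewrite Hc; do 2 eexists.
  by case: (newcs_ok (Ha i) Hh) => ->; rewrite ?size_mkcs // -Ha.
split => //.
  move=> i p; rewrite sent_step (encl_TS _ (Ha' i)).
  case: ltnP => h; first by rewrite addn1.
  rewrite addn0 (leq_trans (Hb i p)) // size_TS // size_cs_mono //.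
move=> i p; rewrite hh_step Hc msg_step sent_step.
set j := nbr N i p; set q := back N i p.
rewrite (encl_TS _ (Ha' j)).
have [r er] := TS_prefix j q (size_cs_mono t j).
exact: take_step (Hb j q) er.
Qed.


Lemma progress L : exists T, forall t, T <= t -> forall i, L <= size (cs t i).
Proof.
elim: L => [|L [T HT]]; first by exists 0.
have Hp : forall i (p : 'I_(deg N i)), exists T', forall t, T' <= t ->
    L < size (decode (hh t.+1 i p)).
  move=> i p; set j := nbr N i p; set q := back N i p.
  set S := size (TS j q L).
  have grow : forall m, S <= sent (T + m) j q \/ m <= sent (T + m) j q.
    elim=> [|m [IH|IH]]; first by right.
      by left; rewrite addnS (leq_trans IH (sent_mono _ _)).
    case: (leqP S (sent (T+m) j q)) => hS.
      by left; rewrite addnS (leq_trans hS (sent_mono _ _)).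
    right; rewrite addnS sent_step.
    have [Ha _ _] := Inv_all (T + m).+1.
    rewrite (encl_TS _ (Ha j)).
    have hS2 : S <= size (TS j q (size (cs (T+m).+1 j))).
      by apply: size_TS; apply: HT; rewrite -addnS leq_addr.
    by rewrite (leq_trans hS hS2) addn1 ltnS.
  exists (T + S) => t ht.
  have hs : S <= sent t j q.
    by case: (grow S) => h; exact: leq_trans h (sent_monoT q ht).
  have [Ha Hb Hc] := Inv_all t; rewrite Hc -/j -/q.
  set Lt := size (cs t j).
  have hLt : L <= Lt by apply: HT; exact: leq_trans (leq_addr _ _) ht.
  have [k [Hk Hk2]] := decode_take (val q :: mkcs j Lt) (sent t j q).
  rewrite /TS Hk size_take /= size_mkcs.
  have hk : L.+1 <= k.
    apply: Hk2; first by rewrite /= size_mkcs ltnS.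
    by rewrite /= take_mkcs.
  by case: (ltnP k Lt.+1) => // _; rewrite ltnS.
have ev_fin : forall (F : finType) (Q : F -> nat -> Prop),
    (forall a, exists T, forall t, T <= t -> Q a t) ->
    exists T, forall t, T <= t -> forall a, Q a t.
  move=> F Q H; have [f Hf] := fin_all_exists H.
  exists (\max_a f a) => t ht a; apply: Hf; exact: leq_trans (leq_bigmax a) ht.
have [T2 H2] := ev_fin _ (fun i t => forall p : 'I_(deg N i), L < size (decode (hh t.+1 i p)))
  (fun i => ev_fin _ _ (Hp i)).
exists (maxn T T2).+1 => -[|t] // ht i.
rewrite ltnS geq_max in ht; case/andP: ht => hT hT2.
have hL := HT t hT i.
case: (ltnP L (size (cs t i))) => h; first exact: leq_trans h (size_cs_mono t i).
have eL : size (cs t i) = L by apply/eqP; rewrite eqn_leq h hL.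
rewrite cs_step /newcs; case: forallP => [_|hf]; first by rewrite size_rcons eL.
exfalso; apply: hf => p; rewrite ffunE eL; exact: H2.
Qed.

End Run.
End Auto.

Lemma outp_rcons K l c : outp K (rcons l c) = Some (propf K c (size l)).
Proof. by case: l => [|a l] //=; rewrite size_rcons /= nth_rcons ltnn eqxx. Qed.

Lemma outp_mkcs K n (N : network n) (x : 'I_n -> 'I_K) i L :
  outp K (mkcs N x i L.+1) = Some (propf K (col N (xv x) L i) L).
Proof.
by rewrite mkcs_S outp_rcons size_mkcs.
Qed.

Unset Implicit Arguments.
Theorem theorem4 (K : nat) :
  @computable_inf_mem 'I_K (option {ffun 'I_K -> rat}) None
    (fun n x => Some (proportions x)).
Proof.
exists _, None, ZZ, z0, (AA K).
move=> n n0 N x.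
have [s0 Hs0] := stable_exists N (xv x).
have [T HT] := progress N x (2 * (s0 + n)).+1.
exists T.+1 => -[|t] // ht i.
change (exec (AA K) z0 None None N x t.+1 i).1.2 with (E N x t.+1 i).1.2.
rewrite y_step.
have [Ha _ _] := Inv_all N x t.+1.
rewrite (Ha i).
have hLz := HT t.+1 (ltnW ht) i.
move: hLz; case: (size (cs N x t.+1 i)) => [//|L] hL.
rewrite ltnS in hL.
rewrite outp_mkcs; congr Some; apply/ffunP => k.
rewrite /propf /proportions !ffunE.
set s := L./2; set m := L - s.
have hs : s0 + n <= s.
  by rewrite /s -(doubleK (s0 + n)) -mul2n half_leq.
have hss : s + s <= L by rewrite addnn /s halfK leq_subr.
have hsL : s <= L by exact: leq_trans (leq_addr _ _) hss.
have hsm : s <= m by rewrite /m leq_subRL.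
have eL : L = s + m by rewrite /m subnKC.
rewrite [in col _ _ L]eL.
have Hs : forall u v, col N (xv x) s u = col N (xv x) s v -> col N (xv x) s.+1 u = col N (xv x) s.+1 v.
  by apply: Hs0; exact: leq_trans (leq_addr _ _) hs.
rewrite (math_prop i (val k) n0 _ Hs); last by apply: leq_trans hsm; exact: leq_trans (leq_addl _ _) hs.
congr (_%:R / _)%R; apply: eq_card => v; by rewrite /= /xv val_eqE.
Qed.
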